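(* Let $\Pi_n$ be a PARITY$_n$ program such that no rule $y\leftarrow B$ of $\Pi_n$ has $y\in var(B)$ and every rule body of $\Pi_n$ is consistent. Then there is a standard PARITY$_n$ program $\Pi_n'$ (again with no rule $y\leftarrow B$ having $y\in var(B)$ and with all bodies consistent) such that $|\Pi_n'|\le|\Pi_n|$.
   Context: A rule element is one of $\top$, $\bot$, $x$, $not\ x$, $not\ not\ x$, where $x$ is a variable. A (canonical) rule is $H\leftarrow B$ with $H$ a variable or $\bot$ and $B$ a finite set of rule elements; a canonical program is a finite set of rules. For a body $B$, $var(B)=\{e\in B: e\text{ is a variable}\}$. For a set of variables $I$: $I\models\top$; $I\not\models\bot$; $I\models x$ iff $I\models not\ not\ x$ iff $x\in I$; $I\models not\ x$ iff $x\notin I$; $I\models B$ iff $I$ satisfies every element of $B$; $I$ is closed under $H\leftarrow B$ if $I\models B$ implies $I\models H$. The reduct $\Pi^I$ replaces $not\ not\ x$ by $\top$ if $x\in I$ else $\bot$, and $not\ x$ by $\top$ if $x\notin I$ else $\bot$; $I$ is an answer set of $\Pi$ if $I$ is the least set closed under all rules of $\Pi^I$; $Ans(\Pi)$ is the set of answer sets; $var(\Pi)$ the set of variables occurring in $\Pi$; $|\Pi|$ the number of rules. Strings $w\in\{0,1\}^n$ are identified with $\{x_i:w_i=1\}$; PARITY$_n$ is the set of strings in $\{0,1\}^n$ with an odd number of 1's; a PARITY$_n$ program is a canonical program $\Pi$ with $var(\Pi)=\{x_1,\dots,x_n\}$ and $Ans(\Pi)=$ PARITY$_n$. For a set $B$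 of rule elements, $S(B)=\{I\subseteq\{x_1,\dots,x_n\}: I\models B\}$; $B$ is consistent if $S(B)\neq\emptyset$. A PARITY$_n$ program $\Pi$ is standard if for every rule $x\leftarrow B\in\Pi$ with head a variable $x$: whenever $S(B\cup\{x\})$ has exactly one element, $not\ not\ x\notin B$. *)

(* Defs.v *)
From HB Require Import structures.
From mathcomp Require Import all_boot.
Set Implicit Arguments. Unset Strict Implicit. Unset Printing Implicit Defensive.

(* Variables x_1, ..., x_n are represented by i : 'I_n (x_{i+1} <-> i). *)
Inductive elem (n : nat) : Type :=
  | ETop | EBot
  | EPos of 'I_n
  | ENeg of 'I_n
  | ENN of 'I_n.        (* not not x *)
Arguments ETop {n}. Arguments EBot {n}.

Definition elem_code n (e : elem n) : bool + ('I_3 * 'I_n) :=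
  match e with
  | ETop => inl true | EBot => inl false
  | EPos i => inr (Ordinal (isT : 0 < 3), i)
  | ENeg i => inr (Ordinal (isT : 1 < 3), i)
  | ENN i => inr (Ordinal (isT : 2 < 3), i)
  end.
Definition elem_decode n (c : bool + ('I_3 * 'I_n)) : elem n :=
  match c with
  | inl true => ETop | inl false => EBot
  | inr (k, i) => if val k == 0 then EPos i else if val k == 1 then ENeg i else ENN i
  end.
Lemma elem_codeK n : cancel (@elem_code n) (@elem_decode n).
Proof. by case. Qed.
HB.instance Definition _ n := Finite.copy (elem n) (can_type (@elem_codeK n)).

(* A rule H <- B : head None = bottom, Some x = variable x; body a finite set. *)
Definition rule n := (option 'I_n * {set elem n})%type.
Definition program n := {set rule n}.

Section Sem.
Variable n : nat.
Implicit Types (I : {set 'I_n}) (e : elem n) (B : {set elem n}) (P : program n).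

Definition sat_elem I e : bool :=
  match e with
  | ETop => true | EBot => false
  | EPos x => x \in I
  | ENeg x => x \notin I
  | ENN x => x \in I
  end.
Definition sat_body I B : bool := [forall e in B, sat_elem I e].
Definition sat_head I (h : option 'I_n) : bool :=
  if h is Some x then x \in I else false.
Definition closed_rule I (r : rule n) : bool := sat_body I r.2 ==> sat_head I r.1.
Definition closed_prog I P : bool := [forall r in P, closed_rule I r].

Definition reduct_elem I e : elem n :=
  match e with
  | ENN x => if x \in I then ETop else EBot
  | ENeg x => if x \notin I then ETop else EBot
  | _ => e
  end.
Definition reduct_rule I (r : rule n) : rule n :=
  (r.1, [set reduct_elem I e | e in r.2]).
Definition reduct I P : program n := [set reduct_rule I r | r in P].

Definition answer_set P I : Prop :=
  closed_prog I (reduct I P) /\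
  forall J, closed_prog J (reduct I P) -> I \subset J.

Definition elem_var e (x : 'I_n) : bool :=
  match e with
  | EPos y | ENeg y | ENN y => y == x
  | _ => false
  end.
Definition occurs_rule (r : rule n) x : bool :=
  (r.1 == Some x) || [exists e in r.2, elem_var e x].
Definition all_vars_occur P : Prop := forall x, exists2 r, r \in P & occurs_rule r x.

Definition parity_program P : Prop :=
  all_vars_occur P /\ forall I, answer_set P I <-> odd #|I|.

Definition S_of B : {set {set 'I_n}} := [set I | sat_body I B].
Definition consistent B : Prop := S_of B != set0.

Definition no_self_support P : Prop :=
  forall r, r \in P -> forall y, r.1 = Some y -> EPos y \notin r.2.
Definition all_bodies_consistent P : Prop := forall r, r \in P -> consistent r.2.

(* standard PARITY_n program (the parity condition is required separately) *)
Definition standard P : Prop :=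
  forall r, r \in P -> forall x, r.1 = Some x ->
    #|S_of (EPos x |: r.2)| = 1 -> ENN x \notin r.2.
End Sem.

(* Main.v *)
Require Import Defs.
From HB Require Import structures.
From mathcomp Require Import all_boot.
From Stdlib Require Import Classical.
Set Implicit Arguments. Unset Strict Implicit. Unset Printing Implicit Defensive.

Section H.
Variable n : nat.
Implicit Types (I J K : {set 'I_n}) (P Q : program n) (B C : {set elem n}).

Definition rb I J (r : rule n) := [forall e in r.2, sat_elem J (reduct_elem I e)].
Definition cl I P J := [forall r in P, rb I J r ==> sat_head J r.1].

Lemma forallU1 (T : finType) (a : T) (A : {set T}) (p : pred T) :
  [forall e in a |: A, p e] = p a && [forall e in A, p e].
Proof.
apply/forall_inP/andP => [H|[H1 /forall_inP H2] e].
- split; first by apply: H; rewrite setU11.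
  by apply/forall_inP => e eA; apply: H; rewrite setU1r.
- by rewrite in_setU1 => /predU1P [->|]; [done|exact: H2].
Qed.

Lemma satbE I J B :
  sat_body J [set reduct_elem I e | e in B] = [forall e in B, sat_elem J (reduct_elem I e)].
Proof.
apply/forall_inP/forall_inP => H e.
- by move=> eC; apply: H; exact: imset_f.
- by move=> /imsetP [e0 e0C ->]; exact: H.
Qed.

Lemma closedE I P J : closed_prog J (reduct I P) = cl I P J.
Proof.
apply/forall_inP/forall_inP => H r.
- move=> rP; have := H _ (imset_f (reduct_rule I) rP).
  by rewrite /closed_rule /= satbE.
- by move=> /imsetP [r0 r0P ->]; rewrite /closed_rule /= satbE; exact: H.
Qed.

Lemma ansE P I : answer_set P I <-> cl I P I /\ forall J, cl I P J -> I \subset J.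
Proof.
rewrite /answer_set closedE; split => [[h1 h2]|[h1 h2]]; split => // J.
- by move=> hJ; apply: h2; rewrite closedE.
- by rewrite closedE; exact: h2.
Qed.

Lemma rb_mono I J K r : J \subset K -> rb I J r -> rb I K r.
Proof.
move=> sJK /forall_inP H; apply/forall_inP => e /H.
by case: e => //= y; [apply: (subsetP sJK) | case: (y \in I) | case: (y \in I)].
Qed.

Lemma rb_self I r : rb I I r = sat_body I r.2.
Proof.
apply: eq_forallb => e; congr (_ ==> _).
by case: e => //= y; case: (boolP (y \in I)).
Qed.

Lemma clU1 I r P J : cl I (r |: P) J = (rb I J r ==> sat_head J r.1) && cl I P J.
Proof. by rewrite /cl forallU1. Qed.

Lemma cl_sub I P Q J : Q \subset P -> cl I P J -> cl I Q J.
Proof.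
move=> sQP /forall_inP H; apply/forall_inP => r rQ; apply: H; exact: (subsetP sQP).
Qed.

Lemma cl_int I Q J K : cl I Q J -> cl I Q K -> cl I Q (J :&: K).
Proof.
move=> /forall_inP h1 /forall_inP h2; apply/forall_inP => -[h C] rQ; apply/implyP => hb.
have := implyP (h1 _ rQ) (rb_mono (subsetIl _ _) hb).
have := implyP (h2 _ rQ) (rb_mono (subsetIr _ _) hb).
by case: h {rQ hb} => [y|] //=; rewrite inE => -> ->.
Qed.

Lemma L1 I r Q : ~~ sat_body I r.2 -> answer_set (r |: Q) I <-> answer_set Q I.
Proof.
move=> nb; rewrite !ansE.
have nrb J : J \subset I -> ~~ rb I J r.
  by move=> sJ; apply/negP => /(rb_mono sJ); rewrite rb_self; apply/negP.
split.
- move=> [hc h2]; move: hc; rewrite clU1 => /andP [_ h1]; split => // J hJ.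
  have sub : I \subset J :&: I.
    apply: h2; rewrite clU1 (negbTE (nrb _ (subsetIr _ _))) /=.
    exact: cl_int.
  exact: subset_trans sub (subsetIl _ _).
- move=> [h1 h2]; split; first by rewrite clU1 (negbTE (nrb _ (subxx _))).
  by move=> J; rewrite clU1 => /andP [_ hJ]; exact: h2.
Qed.

Lemma ans_head P I y : answer_set P I -> y \in I -> exists2 r, r \in P & r.1 = Some y.
Proof.
move=> /ansE [h1 h2] yI.
case: (boolP [exists r in P, r.1 == Some y]) => [/exists_inP [r rP /eqP]|hn].
  by exists r.
exfalso.
  have: I \subset I :\ y.
    apply: h2; apply/forall_inP => -[h C] rP; apply/implyP => hb.
    have := implyP (forall_inP h1 _ rP) (rb_mono (subD1set I y) hb).
    case: h rP {hb} => [z|] //= rP zI.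
    rewrite in_setD1 zI andbT; apply/eqP => zy; move/negP: hn; apply.
    by apply/exists_inP; exists (Some z, C) => //=; rewrite zy.
  by move/subsetP/(_ y yI); rewrite in_setD1 eqxx.
Qed.

Definition std_rule (r : rule n) : bool :=
  if r.1 is Some x then (#|S_of (EPos x |: r.2)| == 1) ==> (ENN x \notin r.2) else true.
Definition nonstd P := [set r in P | ~~ std_rule r].

End H.

Section S.
Variable n : nat.
Implicit Types (I J K : {set 'I_n}) (P Q : program n) (B C : {set elem n}).

Lemma sat_sub I B C : B \subset C -> sat_body I C -> sat_body I B.
Proof.
move=> sBC /forall_inP H; apply/forall_inP => e eB; apply: H; exact: (subsetP sBC).
Qed.

Lemma step P R : parity_program P -> no_self_support P -> all_bodies_consistent P ->
  R \in P -> ~~ std_rule R ->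
  exists P', [/\ parity_program P', no_self_support P', all_bodies_consistent P',
     #|P'| <= #|P| & nonstd P' \subset nonstd P :\ R].
Proof.
move=> [hvar hpar] hns hcons RP.
case: R RP => [[x|] B] RP //=; rewrite /std_rule /= negb_imply negbK => /andP [hS hNN].
have hPx : EPos x \notin B by apply: (hns _ RP).
have [I0 hI0] := cards1P hS.
set R := (Some x, B) in RP *.
set Q := P :\ R.
have PQ : P = R |: Q by rewrite setD1K.
have satB K : sat_body K B = (x \in K) && sat_body K (B :\ ENN x).
  by rewrite -{1}(setD1K hNN) /sat_body forallU1.
have uniqK K : sat_body K B -> K = I0.
  move=> hK; apply/set1P; rewrite -hI0 inE /sat_body forallU1 /=.
  apply/andP; split => //; by move: hK; rewrite satB => /andP [].
have I0S : I0 \in S_of (EPos x |: B) by rewrite hI0 set11.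
have satI0 : sat_body I0 B.
  by move: I0S; rewrite inE; apply: sat_sub; exact: subsetUr.
have xI0 : x \in I0 by move: satI0; rewrite satB => /andP [].
have hNeg : ENeg x \notin B.
  apply/negP => hB; move/forall_inP: satI0 => /(_ _ hB) /=; by rewrite xI0.
have A1 K : ~~ sat_body K B -> answer_set P K <-> answer_set Q K.
  by move=> h; rewrite PQ; apply: (L1 (r := R)).
have ansQP : answer_set Q I0 -> answer_set P I0.
  rewrite PQ !ansE => -[h1 h2]; split.
    by rewrite clU1 h1 andbT /= xI0 implybT.
  by move=> J; rewrite clU1 => /andP [_]; exact: h2.
have [hc|hc] := classic (answer_set P I0 -> answer_set Q I0).
-
  have eqA K : answer_set Q K <-> answer_set P K.
    case: (boolP (sat_body K B)) => hK; last by rewrite A1.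
    by rewrite (uniqK _ hK); split; [exact: ansQP|exact: hc].
  exists Q; split.
  + split.
      move=> y; have: answer_set P [set y] by apply/hpar; rewrite cards1.
      move/eqA => /(ans_head (y := y)) /(_ (set11 y)) [r rQ hr]; exists r => //.
      by rewrite /occurs_rule hr eqxx.
    by move=> I; rewrite eqA.
  + by move=> r /setD1P [_ rP]; apply: hns.
  + by move=> r /setD1P [_ rP]; apply: hcons.
  + by rewrite (cardsD1 R P) RP.
  + apply/subsetP => r; rewrite !inE => /andP [/andP [-> ->] ->].
    by [].
-
  have oddI0 : odd #|I0|.
    apply/hpar; apply: NNPP => h; apply: hc => /h; done.
  set B' := B :\ ENN x.
  set R' := (Some x, B').
  set P' := R' |: Q.
  have A2 K : ~~ sat_body K B' -> answer_set P' K <-> answer_set Q K.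
    by move=> h; apply: (L1 (r := R')).
  have eqA K : answer_set P' K <-> answer_set P K.
    case: (boolP (sat_body K B)) => hK.
      rewrite (uniqK _ hK) PQ !ansE.
      have e J : cl I0 (R |: Q) J = cl I0 P' J.
        rewrite !clU1; congr (_ && _); congr (_ ==> _).
        by rewrite /rb /= -{1}(setD1K hNN) forallU1 /= xI0.
      split => -[h1 h2]; split => [|J].
      - by first [rewrite e | rewrite -e].
      - by move=> hJ; apply: h2; move: hJ; first [rewrite e | rewrite -e].
      - by first [rewrite e | rewrite -e].
      - by move=> hJ; apply: h2; move: hJ; first [rewrite e | rewrite -e].
    case: (boolP (sat_body K B')) => hK'; last exact: (iff_trans (A2 _ hK') (iff_sym (A1 _ hK))).
    have xK : x \notin K by move: hK; rewrite satB hK' andbT.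
    have hxK : sat_body (x |: K) B.
      apply/forall_inP => e eB.
      have [-> | ne] := eqVneq e (ENN x); first by rewrite /= setU11.
      have eB' : e \in B' by rewrite in_setD1 ne eB.
      move/forall_inP: hK' => /(_ _ eB').
      case: e eB {ne eB'} => //= y eB; rewrite in_setU1.
      * by move=> h; rewrite h orbT.
      * move=> h; rewrite negb_or h andbT; apply/eqP => yx; move: hNeg; rewrite -yx.
        by rewrite eB.
      * by move=> h; rewrite h orbT.
    have hI0K := uniqK _ hxK.
    have evenK : ~~ odd #|K|.
      by move: oddI0; rewrite -hI0K cardsU1 xK /=; by case: (odd #|K|).
    split => h.
    * exfalso; move: h => /ansE [h1 _]; move: h1.
      by rewrite clU1 rb_self /= hK' /= (negbTE xK).
    * by move: h => /hpar; rewrite (negbTE evenK).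
  exists P'; split.
  + split.
      move=> y; have [r rP hr] := hvar y.
      have [rR | rnR] := eqVneq r R.
        exists R'; first by rewrite setU11.
        move: hr; rewrite rR /occurs_rule /= => /orP [->//|/exists_inP [e eB he]].
        have [eN | ne] := eqVneq e (ENN x).
          by move: he; rewrite eN /= => /eqP ->; rewrite eqxx.
        by apply/orP; right; apply/exists_inP; exists e => //; rewrite in_setD1 ne eB.
      by exists r => //; rewrite setU1r // in_setD1 rnR.
    by move=> I; rewrite eqA.
  + move=> r; rewrite in_setU1 => /predU1P [-> y [<-]|/setD1P [_ rP]].
      by rewrite in_setD1 (negbTE hPx) andbF.
    by apply: hns.
  + move=> r; rewrite in_setU1 => /predU1P [->|/setD1P [_ rP]]; last by apply: hcons.
    by apply/set0Pn; exists I0; rewrite inE; move: satI0; rewrite satB => /andP [].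
  + by rewrite (cardsD1 R P) RP cardsU1 add1n; case: (R' \in Q).
  + apply/subsetP => r; rewrite !inE => /andP [/predU1P [->|]].
      by rewrite /std_rule /= setD11 implybT.
    by move=> /andP [-> ->] ->.
Qed.

End S.


Theorem mainTheorem12 (n : nat) (P : program n) :
  parity_program P -> no_self_support P -> all_bodies_consistent P ->
  exists P' : program n,
    [/\ parity_program P', standard P', no_self_support P',
        all_bodies_consistent P' & #|P'| <= #|P|].
Proof.
move: {2}#|nonstd P| (leqnn #|nonstd P|) => k.
elim: k P => [|k IH] P hk h1 h2 h3.
- exists P; split => // r rP x hx; move: hk; rewrite leqn0 cards_eq0 => /eqP h0.
  have : r \notin nonstd P by rewrite h0 inE.
  by rewrite inE rP /= negbK /std_rule hx => /implyP H /eqP /H.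
- case: (set_0Vmem (nonstd P)) => [h0|[R]].
  + exists P; split => // r rP x hx.
    have : r \notin nonstd P by rewrite h0 inE.
    by rewrite inE rP /= negbK /std_rule hx => /implyP H /eqP /H.
  + rewrite inE => /andP [RP hR].
    have [P' [p1 p2 p3 p4 p5]] := step h1 h2 h3 RP hR.
    have hk' : #|nonstd P'| <= k.
      have H := subset_leq_card p5.
      move: hk; rewrite (cardsD1 R (nonstd P)) inE RP hR /= add1n ltnS => hk.
      exact: leq_trans H hk.
    have [P'' [q1 q2 q3 q4 q5]] := IH P' hk' p1 p2 p3.
    exists P''; split => //; exact: leq_trans q5 p4.
Qed.
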